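(* Let $A\in\mathbb{C}^{m\times m}$ and $C\in\mathbb{C}^{n\times n}$ be nonsingular, $B\in\mathbb{C}^{m\times n}$, and $M=ABC$. Then: (e) For each type $\tau\in\{(1),(1,2),(1,4),(1,2,4)\}$ there exists $G\in\{B^{\tau}\}$ with $M^*MC^{-1}GA^{-1}=M^*$. (f) For each type $\tau\in\{(1),(1,2),(1,4),(1,2,4)\}$: $M^*MC^{-1}GA^{-1}=M^*$ holds for all $G\in\{B^{\tau}\}$ if and only if $B=0$ or $r(B)=m$. (g) For each type $\tau\in\{(1,3),(1,2,3),(1,3,4)\}$: $M^*MC^{-1}GA^{-1}=M^*$ holds for all (equivalently, for some) $G\in\{B^{\tau}\}$ if and only if $\mathscr{R}(A^*AB)=\mathscr{R}(B)$; likewise $M^*MC^{-1}B^\dagger A^{-1}=M^*$ if and only if $\mathscr{R}(A^*AB)=\mathscr{R}(B)$. (h) For each type $\tau\in\{(1),(1,2),(1,4),(1,2,4)\}$: $B^*BCHA=B^*$ holds for all $H\in\{M^{\tau}\}$ if and only if $B=0$ or $r(B)=m$. (i) For each type $\tau\in\{(1,3),(1,2,3),(1,3,4)\}$: $B^*BCHA=B^*$ holds for all $H\in\{M^{\tau}\}$ if and only if $\mathscr{R}(A^*AB)=\mathscr{R}(B)$; likewise $B^*BCM^\dagger A=B^*$ if and only if $\mathscr{R}(A^*AB)=\mathscr{R}(B)$.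
   Context: For a complex matrix $X$, $X^*$ is its conjugate transpose, $r(X)$ its rank and $\mathscr{R}(X)$ its column space. For $X\in\mathbb{C}^{p\times q}$, a matrix $G\in\mathbb{C}^{q\times p}$ is called an $\{i,\ldots,j\}$-generalized inverse of $X$ (written $X^{(i,\ldots,j)}$) if it satisfies the equations numbered $i,\ldots,j$ among the four Penrose equations (i) $XGX=X$, (ii) $GXG=G$, (iii) $(XG)^*=XG$, (iv) $(GX)^*=GX$; $\{X^{(i,\ldots,j)}\}$ denotes the set of all such $G$. The Moore–Penrose inverse $X^\dagger$ is the unique matrix satisfying all four equations. *)

(* Defs.v *)
(* Complex matrices are modelled over an arbitrary
   numClosedFieldType R (e.g. algC), with Num.conj as complex conjugation. *)
From HB Require Import structures.
From mathcomp Require Import all_boot all_order all_algebra.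
Set Implicit Arguments. Unset Strict Implicit. Unset Printing Implicit Defensive.
Import Order.TTheory GRing.Theory Num.Theory.
Local Open Scope ring_scope.

Definition ctrmx (R : numClosedFieldType) (p q : nat) (X : 'M[R]_(p, q)) : 'M[R]_(q, p) :=
  (map_mx Num.conj X)^T.

Definition penrose (R : numClosedFieldType) (p q : nat)
  (X : 'M[R]_(p, q)) (G : 'M[R]_(q, p)) (i : nat) : Prop :=
  match i with
  | 1%N => X *m G *m X = X
  | 2%N => G *m X *m G = G
  | 3%N => ctrmx (X *m G) = X *m G
  | 4%N => ctrmx (G *m X) = G *m X
  | _ => True
  end.

Definition is_ginv (R : numClosedFieldType) (p q : nat)
  (X : 'M[R]_(p, q)) (G : 'M[R]_(q, p)) (tau : seq nat) : Prop :=
  forall i, i \in tau -> penrose X G i.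

Definition is_MP (R : numClosedFieldType) (p q : nat)
  (X : 'M[R]_(p, q)) (G : 'M[R]_(q, p)) : Prop :=
  is_ginv X G [:: 1; 2; 3; 4]%N.

Definition colspace_eq (R : numClosedFieldType) (p q r : nat)
  (X : 'M[R]_(p, q)) (Y : 'M[R]_(p, r)) : Prop :=
  (X^T == Y^T)%MS.

(* Main.v *)
Require Import Defs.
From HB Require Import structures.
From mathcomp Require Import all_boot all_order all_algebra.
From Stdlib Require Import Setoid.
Import Order.TTheory GRing.Theory Num.Theory.
Local Open Scope ring_scope.

Section Aux.
Context {R : numClosedFieldType}.
Local Notation ct := (@ctrmx R _ _).

Lemma ctK p q (X : 'M[R]_(p, q)) : ctrmx (ctrmx X) = X.
Proof.
by apply/matrixP=> i j; rewrite /ctrmx !mxE conjCK.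
Qed.

Lemma ctM p q r (X : 'M[R]_(p, q)) (Y : 'M[R]_(q, r)) :
  ctrmx (X *m Y) = ctrmx Y *m ctrmx X.
Proof. by rewrite /ctrmx map_mxM trmx_mul. Qed.

Lemma ctD p q (X Y : 'M[R]_(p, q)) : ctrmx (X + Y) = ctrmx X + ctrmx Y.
Proof. by rewrite /ctrmx map_mxD linearD. Qed.

Lemma ctN p q (X : 'M[R]_(p, q)) : ctrmx (- X) = - ctrmx X.
Proof. by rewrite /ctrmx map_mxN linearN. Qed.

Lemma ct0 p q : ctrmx (0 : 'M[R]_(p, q)) = 0.
Proof. by rewrite /ctrmx map_mx0 trmx0. Qed.

Lemma ct1 p : ctrmx (1%:M : 'M[R]_p) = 1%:M.
Proof. by rewrite /ctrmx map_mx1 trmx1. Qed.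

Lemma ct_unit p (A : 'M[R]_p) : A \in unitmx -> ctrmx A \in unitmx.
Proof. by move=> hA; rewrite /ctrmx unitmx_tr map_unitmx. Qed.

Lemma ct_inv p (A : 'M[R]_p) : ctrmx (invmx A) = invmx (ctrmx A).
Proof. by rewrite /ctrmx map_invmx trmx_inv. Qed.

Lemma ct_pos p q (X : 'M[R]_(p, q)) : X *m ctrmx X = 0 -> X = 0.
Proof.
move=> h; apply/matrixP=> i j; rewrite mxE.
have /matrixP/(_ i i) := h; rewrite !mxE => /eqP.
rewrite psumr_eq0; last by move=> k _; rewrite /ctrmx !mxE mul_conjC_ge0.
move/allP/(_ j (mem_index_enum _))/implyP/(_ isT).
by rewrite /ctrmx !mxE mul_conjC_eq0 => /eqP.
Qed.

Lemma ct_pos' p q (X : 'M[R]_(p, q)) : ctrmx X *m X = 0 -> X = 0.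
Proof. by move=> h; have := @ct_pos _ _ (ctrmx X); rewrite ctK => /(_ h) /(congr1 (@ctrmx R _ _)); rewrite ctK ct0. Qed.

Lemma rank_unitl p q (U : 'M[R]_p) (X : 'M[R]_(p, q)) :
  U \in unitmx -> \rank (U *m X) = \rank X.
Proof.
move=> hU; rewrite -mxrank_tr trmx_mul mxrankMfree ?mxrank_tr //.
by rewrite row_free_unit unitmx_tr.
Qed.

Lemma rank_unitr p q (U : 'M[R]_q) (X : 'M[R]_(p, q)) :
  U \in unitmx -> \rank (X *m U) = \rank X.
Proof. by move=> hU; rewrite mxrankMfree // row_free_unit. Qed.

End Aux.
Arguments ct_pos {R p q X} _.
Arguments ct_pos' {R p q X} _.
Arguments ct_unit {R p A} _.

Section MP.
Context {R : numClosedFieldType}.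

Lemma F1 p q (X : 'M[R]_(p, q)) :
  X *m pinvmx (ctrmx X *m X) *m (ctrmx X *m X) = X.
Proof.
set S := ctrmx X *m X; set N := pinvmx S.
have SNS : S *m N *m S = S by rewrite mulmxKpV.
set E := X *m (1%:M - N *m S).
have h1 : ctrmx X *m E = 0.
  by rewrite /E mulmxA mulmxBr mulmx1 mulmxA -/S SNS subrr.
have h2 : ctrmx E *m E = 0 by rewrite /E ctM -mulmxA -/E h1 mulmx0.
have := ct_pos' h2; rewrite /E mulmxBr mulmx1 mulmxA => /eqP.
by rewrite subr_eq0 => /eqP.
Qed.

Lemma ex13 p q (X : 'M[R]_(p, q)) :
  exists G, X *m G *m X = X /\ ctrmx (X *m G) = X *m G.
Proof.
set S := ctrmx X *m X.
have [N hX] : exists N, X *m N *m S = X by exists (pinvmx S); apply: F1.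
have hS : ctrmx S = S by rewrite /S ctM ctK.
have e1 : X *m (N *m ctrmx X) *m X = X by rewrite !mulmxA -mulmxA -/S hX.
exists (N *m ctrmx X); split => //.
clearbody S.
have hXc : ctrmx X = S *m ctrmx N *m ctrmx X.
  by rewrite -{1}hX ctM hS ctM mulmxA.
by rewrite !ctM ctK {2}hXc !mulmxA hX.
Qed.

Lemma exMP p q (X : 'M[R]_(p, q)) : exists G, is_MP X G.
Proof.
have [G3 [h31 h33]] := @ex13 _ _ X.
have [G' [h41 h43]] := @ex13 _ _ (ctrmx X).
set G4 := ctrmx G'.
have k1 : X *m G4 *m X = X.
  by have := congr1 (@ctrmx R _ _) h41; rewrite !ctM !ctK mulmxA.
have k4 : ctrmx (G4 *m X) = G4 *m X.
  by rewrite ctM ctK /G4 -h43 ctM ctK.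
have k1' r (Y : 'M[R]_(r, p)) : Y *m X *m G4 *m X = Y *m X by rewrite -(mulmxA Y) -(mulmxA Y) k1.
have h31' r (Y : 'M[R]_(r, p)) : Y *m X *m G3 *m X = Y *m X by rewrite -(mulmxA Y) -(mulmxA Y) h31.
exists (G4 *m X *m G3) => i; rewrite !inE => /or4P[]/eqP->/=.
- by rewrite ?mulmxA k1 h31.
- by rewrite ?mulmxA h31' k1'.
- by rewrite ?mulmxA k1 h33.
- by rewrite ?mulmxA h31' k4.
Qed.
End MP.
Arguments exMP {R p q} X.

Section Gen.
Context {R : numClosedFieldType}.

Lemma L13 p q r (X : 'M[R]_(p, q)) G (V : 'M[R]_(p, r)) :
  X *m G *m X = X -> ctrmx (X *m G) = X *m G ->
  (ctrmx V *m (X *m G) = ctrmx V <-> exists Y, V = X *m Y).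
Proof.
move=> h1 h3; split.
  move=> /(congr1 (@ctrmx R _ _)); rewrite ctM ctK h3 => e.
  by exists (G *m V); rewrite mulmxA e.
case=> Y ->; rewrite ctM -mulmxA; congr (_ *m _).
by rewrite -{1}h3 -ctM h1.
Qed.

Lemma gen124 p q (X : 'M[R]_(p, q)) G0 (Z : 'M[R]_(q, p)) :
  X *m G0 *m X = X -> G0 *m X *m G0 = G0 -> ctrmx (G0 *m X) = G0 *m X ->
  let G := G0 + G0 *m X *m Z *m (1%:M - X *m G0) in
  [/\ X *m G *m X = X, G *m X *m G = G, ctrmx (G *m X) = G *m X &
      X *m G = X *m G0 + X *m Z *m (1%:M - X *m G0)].
Proof.
move=> h1 h2 h4 G.
have YX : (1%:M - X *m G0) *m X = 0 by rewrite mulmxBl mul1mx h1 subrr.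
have GX : G *m X = G0 *m X by rewrite /G mulmxDl -mulmxA YX mulmx0 addr0.
have XG : X *m G = X *m G0 + X *m Z *m (1%:M - X *m G0).
  by rewrite /G mulmxDr !mulmxA h1.
split => //.
- by rewrite -mulmxA GX mulmxA h1.
- rewrite GX /G mulmxDr !mulmxA h2; by [].
- by rewrite GX.
Qed.

Lemma nz_prod r q p s (U : 'M[R]_(r, q)) (Y : 'M[R]_(p, s)) :
  U != 0 -> Y != 0 -> exists Z : 'M[R]_(q, p), U *m Z *m Y != 0.
Proof.
have ex (a b : nat) (W : 'M[R]_(a, b)) : W != 0 -> exists k i, W k i != 0.
  move=> hW.
  have : ~~ [forall k, forall i, W k i == 0].
    apply: contra hW => /forallP h; apply/eqP/matrixP=> k i; rewrite mxE.
    exact/eqP/(forallP (h k) i).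
  rewrite negb_forall => /existsP[k]; rewrite negb_forall => /existsP[i hki].
  by exists k, i.
move=> /ex[k [i hU]] /ex[j [l hY]].
exists (delta_mx i j); apply/eqP => /matrixP/(_ k l).
rewrite -(mul_delta_mx (0 : 'I_1)) mulmxA -colE -mulmxA -rowE.
rewrite !mxE big_ord1 !mxE => /eqP; rewrite mulf_eq0 (negPf hU) (negPf hY).
by [].
Qed.

Lemma counter p q r (X : 'M[R]_(p, q)) G0 (V : 'M[R]_(p, r)) :
  X *m G0 *m X = X -> G0 *m X *m G0 = G0 -> ctrmx (G0 *m X) = G0 *m X ->
  ctrmx V *m X != 0 -> (\rank X < p)%N ->
  exists G, [/\ X *m G *m X = X, G *m X *m G = G, ctrmx (G *m X) = G *m X &
    ctrmx V *m (X *m G) != ctrmx V].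
Proof.
move=> h1 h2 h4 hVX hr.
case: (eqVneq (ctrmx V *m (X *m G0)) (ctrmx V)) => hV; last by exists G0.
have hY : 1%:M - X *m G0 != 0.
  apply: contraTneq hr => /eqP; rewrite subr_eq0 => /eqP e.
  rewrite -leqNgt; have := mxrankM_maxl X G0; rewrite -e mxrank1 => h.
  by [].
have [Z hZ] := @nz_prod _ _ _ _ _ _ hVX hY.
have [k1 k2 k4 e] := @gen124 _ _ X G0 Z h1 h2 h4.
eexists; split; [exact: k1 | exact: k2 | exact: k4 |].
rewrite e mulmxDr hV -subr_eq0 addrC addKr !mulmxA.
by [].
Qed.

Lemma full p q r (X : 'M[R]_(p, q)) G (V : 'M[R]_(p, r)) :
  X *m G *m X = X -> (V = 0 \/ \rank X = p) -> ctrmx V *m (X *m G) = ctrmx V.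
Proof.
move=> h1 [->|hr]; first by rewrite ct0 mul0mx.
have fX : row_free X by rewrite /row_free hr.
have : (X *m G - 1%:M) *m X = 0 by rewrite mulmxBl mul1mx h1 subrr.
move/eqP; rewrite mulmx_free_eq0 // subr_eq0 => /eqP ->.
by rewrite mulmx1.
Qed.

Lemma colsub p q r (X : 'M[R]_(p, q)) (V : 'M[R]_(p, r)) :
  (exists D, V = X *m D) <-> (V^T <= X^T)%MS.
Proof.
split.
  by case=> D ->; apply/submxP; exists D^T; rewrite trmx_mul.
case/submxP=> D e; exists D^T; apply: trmx_inj; by rewrite trmx_mul trmxK.
Qed.

Lemma coleq_unit p q (U : 'M[R]_p) (B : 'M[R]_(p, q)) : U \in unitmx ->
  ((colspace_eq (U *m B) B <-> exists D, U *m B = B *m D) /\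
   (colspace_eq (U *m B) B <-> exists D, B = U *m B *m D)).
Proof.
move=> hU.
have hr : \rank (U *m B)^T = \rank B^T by rewrite !mxrank_tr rank_unitl.
have e1 : ((U *m B)^T <= B^T)%MS = ((U *m B)^T == B^T)%MS.
  apply/idP/idP => [s|/andP[] //].
  by have := mxrank_leqif_eq s; rewrite hr => /leqif_refl.
have e2 : (B^T <= (U *m B)^T)%MS = ((U *m B)^T == B^T)%MS.
  apply/idP/idP => [s|/andP[] //].
  have := mxrank_leqif_eq s; rewrite hr => /leqif_refl.
  by case/andP=> -> ->.
rewrite /colspace_eq; split.
  by rewrite -e1; apply: iff_sym; apply: colsub.
by rewrite -e2; apply: iff_sym; apply: colsub.
Qed.

End Gen.
Arguments counter {R p q r X G0 V} _ _ _ _ _.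
Arguments full {R p q r X G V} _ _.
Arguments L13 {R p q r X G V} _ _.
Arguments coleq_unit {R p q U} B _.

Section Aux4.
Context {R : numClosedFieldType}.
Lemma mxK a b (U : 'M[R]_b) (X : 'M[R]_(a, b)) :
  U \in unitmx -> X *m U *m invmx U = X.
Proof. by move=> hU; rewrite mulmxK. Qed.
Lemma mxKV a b (U : 'M[R]_b) (X : 'M[R]_(a, b)) :
  U \in unitmx -> X *m invmx U *m U = X.
Proof. by move=> hU; rewrite mulmxKV. Qed.
Lemma cancel_r a b (U : 'M[R]_b) (X Y : 'M[R]_(a, b)) :
  U \in unitmx -> (X *m U = Y *m U <-> X = Y).
Proof. by move=> hU; split=> [e|->//]; rewrite -(mulmxK hU X) e mulmxK. Qed.
Lemma cancel_l a b (U : 'M[R]_a) (X Y : 'M[R]_(a, b)) :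
  U \in unitmx -> (U *m X = U *m Y <-> X = Y).
Proof. by move=> hU; split=> [e|->//]; rewrite -(mulKmx hU X) e mulKmx. Qed.

Lemma mk124 p q (X : 'M[R]_(p, q)) G (tau : seq nat) :
  {subset tau <= [:: 1; 2; 4]%N} ->
  X *m G *m X = X -> G *m X *m G = G -> ctrmx (G *m X) = G *m X ->
  is_ginv X G tau.
Proof. by move=> sub h1 h2 h4 i /sub; rewrite !inE => /or3P[]/eqP->. Qed.

Lemma mkMP p q (X : 'M[R]_(p, q)) G (tau : seq nat) :
  {subset tau <= [:: 1; 2; 3; 4]%N} -> is_MP X G -> is_ginv X G tau.
Proof. by move=> sub h i /sub /h. Qed.

Lemma MP_props p q (X : 'M[R]_(p, q)) G : is_MP X G ->
  [/\ X *m G *m X = X, G *m X *m G = G, ctrmx (X *m G) = X *m G &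
      ctrmx (G *m X) = G *m X].
Proof. by move=> h; split; [exact: (h 1%N)|exact: (h 2%N)|exact: (h 3%N)|exact: (h 4%N)]. Qed.
End Aux4.
Arguments MP_props {R p q X G} _.
Arguments mk124 {R p q X G tau} _ _ _ _.
Arguments mkMP {R p q X G tau} _ _.
Arguments mxK {R a b U X} _.
Arguments mxKV {R a b U X} _.
Arguments cancel_r {R a b U X Y} _.
Arguments cancel_l {R a b U X Y} _.


Theorem lemma4p1 (R : numClosedFieldType) (m n : nat)
  (A : 'M[R]_m) (C : 'M[R]_n) (B : 'M[R]_(m, n)) (M : 'M[R]_(m, n))
  (hA : A \in unitmx) (hC : C \in unitmx) (hM : M = A *m B *m C) :
  let T1 := [:: [:: 1]; [:: 1; 2]; [:: 1; 4]; [:: 1; 2; 4]]%N in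
  let T3 := [:: [:: 1; 3]; [:: 1; 2; 3]; [:: 1; 3; 4]]%N in
  let P (G : 'M[R]_(n, m)) :=
    ctrmx M *m M *m invmx C *m G *m invmx A = ctrmx M in
  let Q (H : 'M[R]_(n, m)) :=
    ctrmx B *m B *m C *m H *m A = ctrmx B in
  let rangeEq := colspace_eq (ctrmx A *m A *m B) B in
  (* (e) *)
  (forall tau, tau \in T1 -> exists G, is_ginv B G tau /\ P G) /\
  (* (f) *)
  (forall tau, tau \in T1 ->
     ((forall G, is_ginv B G tau -> P G) <-> (B = 0 \/ \rank B = m))) /\
  (* (g) *)
  (forall tau, tau \in T3 ->
     ((forall G, is_ginv B G tau -> P G) <-> rangeEq) /\
     ((exists G, is_ginv B G tau /\ P G) <-> rangeEq)) /\
  (forall G, is_MP B G -> (P G <-> rangeEq)) /\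
  (* (h) *)
  (forall tau, tau \in T1 ->
     ((forall H, is_ginv M H tau -> Q H) <-> (B = 0 \/ \rank B = m))) /\
  (* (i) *)
  (forall tau, tau \in T3 ->
     ((forall H, is_ginv M H tau -> Q H) <-> rangeEq)) /\
  (forall H, is_MP M H -> (Q H <-> rangeEq)).
Proof.
move=> T1 T3 P Q rangeEq.
have hT1 tau : tau \in T1 -> (1 \in tau)%N /\ {subset tau <= [:: 1; 2; 4]%N}.
  by rewrite !inE => /or4P[]/eqP->; split => //; apply/allP.
have hT3 tau : tau \in T3 ->
    [/\ (1 \in tau)%N, (3 \in tau)%N & {subset tau <= [:: 1; 2; 3; 4]%N}].
  by rewrite !inE => /or3P[]/eqP->; split => //; apply/allP.
have hAi : invmx A \in unitmx by rewrite unitmx_inv.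
set W := ctrmx A *m A.
have hW : W \in unitmx by rewrite unitmx_mul ct_unit.
set VP := W *m B.
set VQ := invmx (ctrmx A) *m B.
have hP G : P G <-> ctrmx VP *m (B *m G) = ctrmx VP.
  rewrite /P.
  have eL : ctrmx M *m M *m invmx C *m G *m invmx A
      = ctrmx C *m (ctrmx VP *m (B *m G)) *m invmx A.
    by rewrite hM /VP /W !ctM !ctK ?mulmxA (mxK hC).
  have eR : ctrmx M = ctrmx C *m ctrmx VP *m invmx A.
    by rewrite hM /VP /W !ctM !ctK ?mulmxA (mxK hA).
  rewrite eL eR (cancel_r hAi).
  exact: cancel_l (ct_unit hC).
have hQ H : Q H <-> ctrmx VQ *m (M *m H) = ctrmx VQ.
  rewrite /Q.
  have eL : ctrmx B *m B *m C *m H *m A = ctrmx VQ *m (M *m H) *m A.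
    by rewrite hM /VQ !ctM ct_inv !ctK ?mulmxA (mxKV hA).
  have eR : ctrmx B = ctrmx VQ *m A.
    by rewrite /VQ !ctM ct_inv !ctK ?mulmxA (mxKV hA).
  by rewrite eL eR (cancel_r hA).
have [K hK] : exists K, A *m B = K by exists (A *m B).
have eB : B = invmx A *m K by rewrite -hK mulKmx.
have [Kd hKd] := exMP K; have [k1 k2 k3 k4] := MP_props hKd.
have k1' r (Y : 'M[R]_(r, m)) : Y *m K *m Kd *m K = Y *m K.
  by rewrite -(mulmxA Y) -(mulmxA Y) k1.
have kc : ctrmx K *m K *m Kd = ctrmx K by rewrite -mulmxA -k3 -ctM k1.
set G0 := Kd *m A.
have g1 : B *m G0 *m B = B.
  by rewrite /G0 eB ?mulmxA (mxK hA) k1'.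
have g2 : G0 *m B *m G0 = G0 by rewrite /G0 eB ?mulmxA (mxK hA) k2.
have g4 : ctrmx (G0 *m B) = G0 *m B by rewrite /G0 eB ?mulmxA (mxK hA) k4.
have eVP : ctrmx VP = ctrmx K *m A.
  by rewrite /VP /W eB ?mulmxA (mxK hA) ctM ctK.
have pG0 : P G0.
  by apply/hP; rewrite eVP /G0 eB ?mulmxA (mxK hA) kc.
have hVXP : B != 0 -> ctrmx VP *m B != 0.
  move=> nzB; rewrite eVP; apply: contra nzB.
  rewrite {1}eB ?mulmxA (mxK hA) => /eqP /ct_pos' hK0.
  by rewrite eB hK0 mulmx0.
have eVQ : ctrmx VQ = ctrmx B *m invmx A by rewrite /VQ ctM ct_inv ctK.
have hVXQ : B != 0 -> ctrmx VQ *m M != 0.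
  move=> nzB; apply: contra nzB => /eqP e.
  move: e; rewrite eVQ hM ?mulmxA (mxKV hA) => e.
  have : ctrmx B *m B = 0 by rewrite -(mxK (X:=ctrmx B *m B) hC) e mul0mx.
  by move/ct_pos' => ->.
have hrM : \rank M = \rank B by rewrite hM rank_unitr // rank_unitl.
have [Md hMd] := exMP M; have [d1 d2 d3 d4] := MP_props hMd.
have [Bd hBd] := exMP B; have [b1 b2 b3 b4] := MP_props hBd.
have hPg G : B *m G *m B = B -> ctrmx (B *m G) = B *m G -> (P G <-> rangeEq).
  move=> h1 h3; rewrite hP (L13 h1 h3).
  exact: iff_sym (coleq_unit B hW).1.
have eRE : rangeEq <-> exists D, B = W *m B *m D := (coleq_unit B hW).2.
have hQg H : M *m H *m M = M -> ctrmx (M *m H) = M *m H -> (Q H <-> rangeEq).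
  move=> h1 h3; rewrite hQ (L13 h1 h3) eRE; split.
    case=> Y e; exists (C *m Y).
    transitivity (ctrmx A *m VQ); first by rewrite /VQ mulKVmx // ct_unit.
    by rewrite e hM /W ?mulmxA.
  case=> D e; exists (invmx C *m D).
  rewrite hM ?mulmxA (mxK hC) /VQ {1}e /W ?mulmxA (mulVmx (ct_unit hA)) mul1mx.
  by [].
split.
  move=> tau /hT1 [_ sub]; exists G0; split => //; exact: mk124 sub g1 g2 g4.
split.
  move=> tau /hT1 [h1 sub]; split.
    move=> hall; case: (eqVneq B 0) => [->|nzB]; first by left.
    case: (eqVneq (\rank B) m) => hr; first by right.
    exfalso.
    have hlt : (\rank B < m)%N by rewrite ltn_neqAle hr rank_leq_row.
    have [G [q1 q2 q4 q]] := counter g1 g2 g4 (hVXP nzB) hlt.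
    move/negP: q; apply; apply/eqP/hP; apply: hall; exact: mk124 sub q1 q2 q4.
  move=> hc G hG; apply/hP; apply: full (hG _ h1) _.
  by case: hc => e; [left; rewrite /VP e mulmx0 | right].
split.
  move=> tau /hT3 [h1 h3 sub]; split; split.
  - move=> hall; apply/(hPg Bd b1 b3); apply: hall; exact: mkMP sub hBd.
  - move=> hr G hG; exact/(hPg G (hG _ h1) (hG _ h3)).
  - case=> G [hG pG]; exact/(hPg G (hG _ h1) (hG _ h3)).
  - move=> hr; exists Bd; split; [exact: mkMP sub hBd | exact/(hPg Bd b1 b3)].
split.
  by move=> G /MP_props [q1 _ q3 _]; apply: hPg.
split.
  move=> tau /hT1 [h1 sub]; split.
    move=> hall; case: (eqVneq B 0) => [->|nzB]; first by left.
    case: (eqVneq (\rank B) m) => hr; first by right.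
    exfalso.
    have hlt : (\rank M < m)%N by rewrite hrM ltn_neqAle hr rank_leq_row.
    have [G [q1 q2 q4 q]] := counter d1 d2 d4 (hVXQ nzB) hlt.
    move/negP: q; apply; apply/eqP/hQ; apply: hall; exact: mk124 sub q1 q2 q4.
  move=> hc H hH; apply/hQ; apply: full (hH _ h1) _.
  by case: hc => e; [left; rewrite /VQ e mulmx0 | right; rewrite hrM].
split.
  move=> tau /hT3 [h1 h3 sub]; split.
    move=> hall; apply/(hQg Md d1 d3); apply: hall; exact: mkMP sub hMd.
  move=> hr H hH; exact/(hQg H (hH _ h1) (hH _ h3)).
by move=> H /MP_props [q1 _ q3 _]; apply: hQg.
Qed.
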